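(* (Main) Let $\mathbb{K}$ be a field, $n>1$, $a=\sum_{j=0}^d c_j s^j\in\mathbb{K}[s]^n$ a non-zero row vector of degree $d$ ($c_j\in\mathbb{K}^n$), and $A\in\mathbb{K}^{(2d+1)\times n(d+1)}$ the matrix whose $(i,\,kn+r)$ entry ($1\le i\le 2d+1$, $0\le k\le d$, $1\le r\le n$) is the $r$-th entry of $c_{i-1-k}$ (zero if $i-1-k\notin\{0,\dots,d\}$). With $\tilde q$ and $b_r$ as in the context, the set $u=\{b_r^\flat\mid r\in\tilde q\}$ is a $\mu$-basis of $a$.
   Context: A column of a matrix is pivotal if it is either the first column and non-zero, or linearly independent of all previous columns; otherwise non-pivotal. $p$ is the set of pivotal indices of $A$, $q$ the set of non-pivotal indices, and $\tilde q=\{\min\varrho\mid\varrho\in q/(n)\}$ the basic non-pivotal indices (minimal elements of the classes of $q$ modulo $n$). For $i\in q$ write uniquely $A_{*i}=\sum_{\{j\in p\mid j<i\}}\alpha^{(i)}_jA_{*j}$ ($A_{*j}$ the $j$-th column) and set $b_i=e_i-\sum_{\{j\in p\mid j<i\}}\alpha^{(i)}_je_j$ ($e_i$ standard basis vectors of $\mathbb{K}^{n(d+1)}$). For $v=[w_0;\dots;w_d]\in\mathbb{K}^{n(d+1)}$ ($w_i\in\mathbb{K}^n$), $v^\flat=\sum_i s^iw_i\in\mathbb{K}[s]^n$. $\mathrm{syz}(a)=\{h\in\mathbb{K}[s]^n\mid a\,h=0\}$. For non-zero $h\in\mathbb{K}[s]^n$, $LV(h)\in\mathbb{K}^n$ is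 the vector of coefficients of $s^{\deg h}$ in its entries, $\deg h=\max_i\deg h_i$. A subset $u=\{u_1,\dots,u_{n-1}\}\subset\mathbb{K}[s]^n$ is a $\mu$-basis of $a$ if: (1) $u$ has exactly $n-1$ elements; (2) $LV(u_1),\dots,LV(u_{n-1})$ are linearly independent over $\mathbb{K}$; (3) $u$ is a basis of the $\mathbb{K}[s]$-module $\mathrm{syz}(a)$. *)

(* Defs.v *)
From HB Require Import structures.
From mathcomp Require Import all_boot all_order all_algebra.
Set Implicit Arguments. Unset Strict Implicit. Unset Printing Implicit Defensive.
Import Order.TTheory GRing.Theory Num.Theory.
Local Open Scope ring_scope.

Section MuBasis.
Variable K : fieldType.

Definition pdeg m1 m2 (M : 'M[{poly K}]_(m1, m2)) : nat :=
  (\max_(i < m1) \max_(j < m2) size (M i j)).-1.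

Definition LV n (h : 'cV[{poly K}]_n) : 'cV[K]_n :=
  \col_i (h i 0)`_(pdeg h).

Definition in_syz n (a : 'rV[{poly K}]_n) (h : 'cV[{poly K}]_n) : bool :=
  a *m h == 0.

(* u (a finite set, given by a list of its elements) is a mu-basis of a *)
Definition mu_basis n (a : 'rV[{poly K}]_n) (u : seq 'cV[{poly K}]_n) : Prop :=
  let us := undup u in
  [/\ size us = (n - 1)%N,
      free [seq LV h | h <- us],
      all (in_syz a) us,
      (forall h, a *m h = 0 ->
         exists p : 'I_(size us) -> {poly K}, h = \sum_i p i *: us`_i)
    & (forall p : 'I_(size us) -> {poly K},
         \sum_i p i *: us`_i = 0 -> forall i, p i = 0)].

(* nat-indexed access to entries (0 outside range) *)
Definition aent n (a : 'rV[{poly K}]_n) (r : nat) : {poly K} :=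
  if insub r is Some r' then a 0 r' else 0.
Definition vent N (v : 'cV[K]_N) (c : nat) : K :=
  if insub c is Some c' then v c' 0 else 0.

(* the (2d+1) x n(d+1) matrix A; 0-based: row i, column k*n + r holds the
   r-th entry of c_(i-k) (0 if i-k not in {0..d}) *)
Definition Amat n d (a : 'rV[{poly K}]_n) : 'M[K]_(2 * d + 1, n * (d + 1)) :=
  \matrix_(i, c) (let k := (c %/ n)%N in let r := (c %% n)%N in
                  if (k <= i)%N then (aent a r)`_(i - k) else 0).

Definition pivotal m N (M : 'M[K]_(m, N)) (j : 'I_N) : bool :=
  ~~ ((col j M)^T <= (\sum_(j' < N | (j' < j)%N) <<(col j' M)^T>>)%MS)%MS.

Definition qtilde m N (M : 'M[K]_(m, N)) (n : nat) : {set 'I_N} :=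
  [set i : 'I_N | ~~ pivotal M i &
     [forall i' : 'I_N, (~~ pivotal M i' && (i' %% n == i %% n)%N) ==> (i <= i')%N]].

Definition bvec m N (M : 'M[K]_(m, N)) (alpha : 'I_N -> 'I_N -> K) (i : 'I_N)
  : 'cV[K]_N :=
  delta_mx i 0 - \sum_(j < N | pivotal M j && (j < i)%N) alpha i j *: delta_mx j 0.

Definition flat n d (v : 'cV[K]_(n * (d + 1))) : 'cV[{poly K}]_n :=
  \col_(r < n) \sum_(k < d + 1) (vent v (k * n + r))%:P * 'X^k.

End MuBasis.

(* Main.v *)
Require Import Defs.
From HB Require Import structures.
From mathcomp Require Import all_boot all_order all_algebra.
From mathcomp Require Import fingroup perm zify.
Set Implicit Arguments. Unset Strict Implicit. Unset Printing Implicit Defensive.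
Import Order.TTheory GRing.Theory Num.Theory.
Local Open Scope ring_scope.

Section Aux.
Variable K : fieldType.

Lemma coefM_top (p q : {poly K}) m k :
  (size p <= m.+1)%N -> (size q <= k.+1)%N -> (p * q)`_(m + k) = p`_m * q`_k.
Proof.
move=> /leq_sizeP sp /leq_sizeP sq.
rewrite coefM (bigD1 (Ordinal (ltn_addr k (ltnSn m)))) //= addKn big1 ?addr0 //.
move=> j; rewrite -val_eqE /= => njm.
case: (ltngtP j m) njm => // [ltjm|ltmj] _.
  rewrite sq ?mulr0 //; move: (nat_of_ord j) ltjm => x; lia.
by rewrite sp ?mul0r.
Qed.

Lemma size_mul_le (p q : {poly K}) m k :
  (size p <= m.+1)%N -> (size q <= k.+1)%N -> (size (p * q)%R <= (m + k).+1)%N.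
Proof.
move=> sp sq; apply: leq_trans (size_polyMleq p q) _.
move: sp sq; case: (size p) => [|sp'] //=; case: (size q) => [|sq'] //=; lia.
Qed.

Lemma pdeg_size m1 m2 (M : 'M[{poly K}]_(m1, m2)) i j :
  (size (M i j) <= (pdeg M).+1)%N.
Proof.
rewrite /pdeg; apply: leq_trans (leqSpred _).
apply: leq_trans (leq_bigmax i); exact: (leq_bigmax j).
Qed.

Lemma pdeg_le m1 m2 (M : 'M[{poly K}]_(m1, m2)) k :
  (forall i j, size (M i j) <= k.+1)%N -> (pdeg M <= k)%N.
Proof.
move=> H; rewrite /pdeg.
have : (\max_(i < m1) \max_(j < m2) size (M i j) <= k.+1)%N.
  by apply/bigmax_leqP => i _; apply/bigmax_leqP => j _.
lia.
Qed.

Lemma pdeg_ge m1 m2 (M : 'M[{poly K}]_(m1, m2)) k i j :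
  (M i j)`_k != 0 -> (k <= pdeg M)%N.
Proof.
move=> nz; have H := pdeg_size M i j.
rewrite leqNgt; apply/negP => lt; move/leq_sizeP: (leq_trans H lt) => H2.
by rewrite H2 ?eqxx in nz.
Qed.

Lemma pdeg_eq m1 m2 (M : 'M[{poly K}]_(m1, m2)) k i j :
  (forall i j, size (M i j) <= k.+1)%N -> (M i j)`_k != 0 -> pdeg M = k.
Proof.
move=> H nz; apply/eqP; rewrite eqn_leq pdeg_le //; exact: pdeg_ge nz.
Qed.

Lemma LV_neq0 n (h : 'cV[{poly K}]_n) : h != 0 -> LV h != 0.
Proof.
move=> hn; apply/negP => /eqP LV0.
have H : forall i j, (size (h i j) <= (pdeg h))%N.
  move=> i j; have := pdeg_size h i j; rewrite leq_eqVlt ltnS => /orP[/eqP E|//].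
  have := congr1 (fun M : 'cV[K]_n => M i 0) LV0; rewrite !mxE => C.
  have j0 : j = 0 by apply: ord1.
  subst j; move: C; rewrite -/(pdeg h) -[pdeg h]/((pdeg h).+1.-1) -E -lead_coefE => /eqP.
  by rewrite lead_coef_eq0 => /eqP ->; rewrite size_poly0.
case E: (pdeg h) => [|D] in H.
  move/negP: hn; apply; apply/eqP/matrixP => i j; rewrite mxE; apply/size_poly_leq0P; exact: H.
have := pdeg_le H; by rewrite E ltnn.
Qed.

Definition islast n (w : 'cV[K]_n) (r : 'I_n) :=
  w r 0 != 0 /\ forall j : 'I_n, (r < j)%N -> w j 0 = 0.

Lemma islast_ex n (w : 'cV[K]_n) : w != 0 -> exists r, islast w r.
Proof.
move=> wn.
have [i0 Hi0] : exists i, w i 0 != 0.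
  apply/existsP; move: wn; apply: contraR; rewrite negb_exists => /forallP H.
  apply/eqP/matrixP => i j; rewrite (ord1 j) mxE; exact/eqP/negbNE/H.
case: (@arg_maxnP _ i0 (fun i => w i 0 != 0) (fun i : 'I_n => i : nat) Hi0) => r Hr Hmax.
exists r; split => // j lt; apply/eqP; apply: contraTT lt => Hj.
by rewrite -leqNgt; exact: Hmax.
Qed.

Lemma islast_uniq n (w : 'cV[K]_n) r1 r2 : islast w r1 -> islast w r2 -> r1 = r2.
Proof.
move=> [n1 H1] [n2 H2]; apply/val_inj.
case: (ltngtP r1 r2) => // [lt|lt]; first by rewrite H1 ?eqxx in n2.
by rewrite H2 ?eqxx in n1.
Qed.

Lemma tri_indep m n (w : 'I_m -> 'cV[K]_n) (ld : 'I_m -> 'I_n) (c : 'I_m -> K) :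
  injective ld -> (forall i, islast (w i) (ld i)) ->
  \sum_i c i *: w i = 0 -> forall i, c i = 0.
Proof.
move=> ldi Hl S0 i; apply/eqP/negPn/negP => ci.
case: (@arg_maxnP _ i (fun i => c i != 0) (fun i => (ld i : nat)) ci) => i1 Hi1 Hmax.
have := congr1 (fun M : 'cV[K]_n => M (ld i1) 0) S0; rewrite summxE (bigD1 i1) //= big1.
  by rewrite addr0 !mxE => /eqP; rewrite mulf_eq0 (negbTE Hi1) (negbTE (Hl i1).1).
move=> j nj; rewrite !mxE; have [->|cj] := eqVneq (c j) 0; first by rewrite mul0r.
rewrite (Hl j).2 ?mulr0 //; have : (ld j <= ld i1)%N by exact: Hmax.
rewrite leq_eqVlt => /orP[|//].
by move=> /eqP/val_inj/ldi E; rewrite E eqxx in nj.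
Qed.

End Aux.

Section Aux2.
Variable K : fieldType.

Lemma coef_prod_top (I : Type) (r : seq I) (p : I -> {poly K}) (e : I -> nat) :
  (forall i, (size (p i) <= (e i).+1)%N) ->
  (size (\prod_(i <- r) p i)%R <= (\sum_(i <- r) e i).+1)%N /\
  (\prod_(i <- r) p i)`_(\sum_(i <- r) e i) = \prod_(i <- r) (p i)`_(e i).
Proof.
move=> H; elim: r => [|x r [IH1 IH2]].
  by rewrite !big_nil size_poly1 coef1.
rewrite !big_cons; split; first exact: size_mul_le.
by rewrite coefM_top // IH2.
Qed.

Lemma coef_sign (b : bool) (p : {poly K}) k : ((-1) ^+ b * p)`_k = (-1) ^+ b * p`_k.
Proof. by case: b; rewrite ?expr0 ?expr1 ?mul1r ?mulN1r ?coefN. Qed.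

Lemma det_coef_top n (H : 'M[{poly K}]_n) (e : 'I_n -> nat) :
  (forall i j, (size (H i j) <= (e j).+1)%N) ->
  (\det H)`_(\sum_j e j)%N = \det (\matrix_(i, j) (H i j)`_(e j)).
Proof.
move=> He; rewrite /determinant coef_sum; apply: eq_bigr => s _.
rewrite coef_sign; congr (_ * _).
have -> : (\sum_j e j = \sum_i e (s i))%N.
  by rewrite (reindex_inj (@perm_inj _ s)).
have [_ ->] := @coef_prod_top _ (index_enum _) (fun i => H i (s i)) (fun i => e (s i)) (fun i => He i (s i)).
by apply: eq_bigr => i _; rewrite mxE.
Qed.

Lemma syz_family_contra n (a : 'rV[{poly K}]_n) (h : 'I_n -> 'cV[{poly K}]_n) :
  (forall r, a *m h r = 0) -> (forall r, islast (LV (h r)) r) -> a = 0.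
Proof.
move=> Hs Hl.
pose H := \matrix_(i, j) h j i 0.
pose e := fun j => pdeg (h j).
have dH : \det H != 0.
  apply/negP => /eqP d0.
  have Hsz : forall i j, (size (H i j) <= (e j).+1)%N.
    by move=> i j; rewrite mxE; exact: pdeg_size.
  have := det_coef_top Hsz.
  rewrite d0 coef0 -det_tr det_trig.
    move=> /esym /eqP; rewrite prodf_seq_eq0 => /hasP [i _]; rewrite !mxE.
    by move: (Hl i).1; rewrite mxE => /negbTE ->.
  apply/is_trig_mxP => i j lt; rewrite !mxE.
  by move: ((Hl i).2 j lt); rewrite mxE.
have aH : a *m H = 0.
  apply/matrixP => i j; rewrite (ord1 i) !mxE.
  transitivity ((a *m h j) 0 0); last by rewrite Hs mxE.
  by rewrite mxE; apply: eq_bigr => k _; rewrite mxE.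
have : a *m (H *m \adj H) = 0 by rewrite mulmxA aH mul0mx.
rewrite mul_mx_adj mul_mx_scalar => /matrixP E.
apply/matrixP => i j; have := E i j; rewrite !mxE => /eqP.
by rewrite mulf_eq0 (negbTE dH) /= => /eqP.
Qed.

End Aux2.

Section Aux3.
Variable K : fieldType.

Lemma poly_indep m n (g : 'I_m -> 'cV[{poly K}]_n) (ld : 'I_m -> 'I_n)
  (p : 'I_m -> {poly K}) :
  injective ld -> (forall i, islast (LV (g i)) (ld i)) ->
  \sum_i p i *: g i = 0 -> forall i, p i = 0.
Proof.
move=> ldi Hl S0 i; apply/eqP/negPn/negP => pi.
pose k := fun i => pdeg (g i).
pose F := fun i => ((size (p i)).-1 + k i)%N.
case: (@arg_maxnP _ i (fun i => p i != 0) F pi) => i1 Hi1 Hmax.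
pose E := F i1.
pose c := fun i => if p i != 0 then (p i)`_(E - k i) else 0.
have Hc : \sum_i c i *: LV (g i) = 0.
  apply/matrixP => j z; rewrite (ord1 z) summxE mxE.
  have := congr1 (fun M : 'cV[{poly K}]_n => (M j 0)`_E) S0.
  rewrite summxE coef_sum mxE coef0 => E0; rewrite -[RHS]E0; apply: eq_bigr => l _.
  rewrite !mxE /c; case: ifP => [pl|/negbT/negPn/eqP ->]; last by rewrite !mul0r coef0.
  have FlE : (F l <= E)%N by exact: Hmax.
  have kE : (k l <= E)%N by move: FlE; rewrite /F; lia.
  have -> : E = ((E - k l) + k l)%N by rewrite subnK.
  rewrite addnK coefM_top //; last exact: pdeg_size.
  have : (0 < size (p l))%N by rewrite size_poly_gt0.
  move: FlE; rewrite /F; lia.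
have := tri_indep ldi Hl Hc i1; rewrite /c Hi1 /E /F addnK => /eqP.
by rewrite -lead_coefE lead_coef_eq0 (negbTE Hi1).
Qed.

End Aux3.

Lemma sum_split (R : nmodType) (F : nat -> R) n m :
  \sum_(0 <= c < n * m) F c = \sum_(0 <= k < m) \sum_(0 <= r < n) F (k * n + r)%N.
Proof.
elim: m => [|m IH]; first by rewrite muln0 !big_geq.
rewrite big_nat_recr //= -IH mulnSr (@big_cat_nat _ _ _ (n * m)%N) ?leq_addr //=.
congr (_ + _); rewrite -{1}[(n * m)%N]add0n big_addn addKn.
by apply: eq_bigr => r _; rewrite addnC mulnC.
Qed.

Section Main.
Variable K : fieldType.
Variables (n d : nat) (a : 'rV[{poly K}]_n).
Hypothesis n1 : (1 < n)%N.
Hypothesis pa : pdeg a = d.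

Local Notation N := (n * (d + 1))%N.
Lemma n0 : (0 < n)%N. Proof. exact: ltnW. Qed.

Lemma vent_ord m (v : 'cV[K]_m) (c : 'I_m) : vent v c = v c 0.
Proof.
rewrite /vent; case: insubP => [c' _ E|]; last by rewrite ltn_ord.
by congr (v _ _); apply: val_inj.
Qed.

Lemma vent_out m (v : 'cV[K]_m) c : (m <= c)%N -> vent v c = 0.
Proof. by move=> H; rewrite /vent insubF // ltnNge H. Qed.

Lemma flat_coef (v : 'cV[K]_N) (r : 'I_n) t :
  ((flat v r 0)`_t) = if (t < d + 1)%N then vent v (t * n + r) else 0.
Proof.
rewrite mxE coef_sum.
under eq_bigr => k _ do rewrite coefCM coefXn.
case: ifP => Ht.
  rewrite (bigD1 (Ordinal Ht)) //= eqxx mulr1 big1 ?addr0 // => k nk.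
  rewrite eq_sym; case: eqP => [E|]; last by rewrite mulr0.
  by case/negP: nk; apply/eqP/val_inj.
rewrite big1 // => k _; case: eqP => [E|]; last by rewrite mulr0.
by move: (ltn_ord k); rewrite -E Ht.
Qed.

Lemma flat_size (v : 'cV[K]_N) r : (size (flat v r 0)%R <= d + 1)%N.
Proof. by apply/leq_sizeP => t Ht; rewrite flat_coef ltnNge Ht. Qed.

Lemma a_size r : (size (a 0 r)%R <= d.+1)%N.
Proof. rewrite -pa; exact: pdeg_size. Qed.

Lemma aent_ord (r : 'I_n) : aent a r = a 0 r.
Proof.
rewrite /aent; case: insubP => [c' _ E|]; last by rewrite ltn_ord.
by congr (a _ _); apply: val_inj.
Qed.

Definition Acoef (t c : nat) : K :=
  if (c %/ n <= t)%N then (aent a (c %% n))`_(t - c %/ n) else 0.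

Lemma syz_coef (v : 'cV[K]_N) t :
  ((a *m flat v) 0 0)`_t = \sum_(c < N) Acoef t c * v c 0.
Proof.
rewrite mxE coef_sum.
transitivity (\sum_(0 <= c < N) Acoef t c * vent v c); last first.
  by rewrite big_mkord; apply: eq_bigr => c _; rewrite vent_ord.
rewrite sum_split exchange_big /= big_mkord; apply: eq_bigr => r _.
rewrite mxE mulr_sumr coef_sum big_mkord; apply: eq_bigr => k _.
rewrite mulrCA coefCM coefMXn /Acoef mulrC.
rewrite divnMDl ?n0 // divn_small // addn0 modnMDl modn_small // aent_ord.
by case: ltnP => H; rewrite ?mulr0 // subnKC.
Qed.

Local Notation A := (Amat d a).

Lemma A_coef (t : 'I_(2 * d + 1)) (v : 'cV[K]_N) :
  (A *m v) t 0 = \sum_(c < N) Acoef t c * v c 0.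
Proof. by rewrite mxE; apply: eq_bigr => c _; rewrite mxE. Qed.

Lemma syz_high (v : 'cV[K]_N) t : (2 * d + 1 <= t)%N -> ((a *m flat v) 0 0)`_t = 0.
Proof.
move=> Ht; rewrite mxE coef_sum big1 // => r _.
have : (size (a 0 r * flat v r 0)%R <= (d + d).+1)%N.
  apply: size_mul_le; first exact: a_size.
  by have := flat_size v r; rewrite addn1.
move/leq_sizeP; apply; move: Ht; lia.
Qed.

Lemma ker_syz (v : 'cV[K]_N) : A *m v = 0 -> a *m flat v = 0.
Proof.
move=> Av; apply/matrixP => i j; rewrite (ord1 i) (ord1 j) [X in _ = X]mxE; apply/polyP => t.
rewrite coef0; case: (ltnP t (2 * d + 1)) => Ht; last exact: syz_high.
rewrite syz_coef.
have := A_coef (Ordinal Ht) v; rewrite Av mxE /= => <-; done.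
Qed.

Lemma syz_ker (v : 'cV[K]_N) : a *m flat v = 0 -> A *m v = 0.
Proof.
move=> Sv; apply/matrixP => i j; rewrite (ord1 j) A_coef -syz_coef Sv !mxE.
by rewrite coef0.
Qed.


Lemma idx_lt t r : (t < d + 1)%N -> (r < n)%N -> (t * n + r < N)%N.
Proof. move=> *; nia. Qed.

Definition unflat (h : 'cV[{poly K}]_n) : 'cV[K]_N :=
  \col_(c < N) (h (Ordinal (ltn_pmod c n0)) 0)`_(c %/ n).

Lemma unflat_idx (h : 'cV[{poly K}]_n) t (r : 'I_n) (H : (t * n + r < N)%N) :
  unflat h (Ordinal H) 0 = (h r 0)`_t.
Proof.
rewrite mxE /=; congr ((h _ 0)`_ _).
  by apply: val_inj => /=; rewrite modnMDl modn_small.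
by rewrite divnMDl ?n0 // divn_small // addn0.
Qed.

Lemma flat_unflat (h : 'cV[{poly K}]_n) : (pdeg h <= d)%N -> flat (unflat h) = h.
Proof.
move=> hd; apply/matrixP => r j; rewrite (ord1 j); apply/polyP => t.
rewrite flat_coef; case: ifP => Ht.
  have H := idx_lt Ht (ltn_ord r).
  by rewrite -[(t * n + r)%N]/(nat_of_ord (Ordinal H)) vent_ord unflat_idx.
have := pdeg_size h r 0 => /leq_sizeP -> //; move: Ht hd; lia.
Qed.

Lemma npl (v : 'cV[K]_N) (c0 : 'I_N) :
  A *m v = 0 -> v c0 0 != 0 -> (forall c : 'I_N, (c0 < c)%N -> v c 0 = 0) ->
  ~~ pivotal A c0.
Proof.
move=> Av vc0 Hz; rewrite /pivotal negbK; apply/sub_sums_genmxP.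
exists (fun c => (- (v c0 0)^-1 * v c 0)%:M); apply/matrixP => i j.
rewrite (ord1 i) [LHS]mxE [LHS]mxE summxE.
have := congr1 (fun M : 'cV[K]_(2 * d + 1) => M j 0) Av.
rewrite [LHS]mxE [RHS]mxE (bigD1 c0) //= => E.
have E2 : A j c0 * v c0 0 = - \sum_(c < N | (c < c0)%N) A j c * v c 0.
  apply/eqP; rewrite -addr_eq0; apply/eqP; rewrite -[RHS]E; congr (_ + _).
  rewrite [RHS]big_mkcond [LHS]big_mkcond; apply: eq_bigr => c _ /=.
  rewrite -val_eqE /=; case: (ltngtP c c0) => H //.
  by rewrite Hz ?mulr0.
have -> : A j c0 = (v c0 0)^-1 * (A j c0 * v c0 0) by rewrite mulrCA mulVf ?mulr1.
rewrite E2 mulrN -mulNr mulr_sumr; apply: eq_bigr => c _.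
rewrite [RHS]mxE big_ord1 [_%:M _ _]mxE [(col _ _)^T _ _]mxE [col _ _ _ _]mxE eqxx mulr1n.
by rewrite [A j c * _]mulrC mulrA.
Qed.

Lemma syz_np (h : 'cV[{poly K}]_n) (r : 'I_n) :
  a *m h = 0 -> (pdeg h <= d)%N -> islast (LV h) r ->
  exists c : 'I_N, (c : nat) = (pdeg h * n + r)%N /\ ~~ pivotal A c.
Proof.
move=> Sh hd [Hr Hz].
have Ht : (pdeg h < d + 1)%N by rewrite addn1.
have H := idx_lt Ht (ltn_ord r).
exists (Ordinal H); split => //; apply: (npl (v := unflat h)).
- by apply: syz_ker; rewrite flat_unflat.
- by rewrite unflat_idx; move: Hr; rewrite mxE.
move=> c lt; rewrite mxE.
have Hc := divn_eq c n; have Hm := ltn_pmod c n0.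
move: lt => /= lt.
have [Hq|Hq|Hq] := ltngtP (c %/ n) (pdeg h).
- exfalso; move: Hc Hm Hq lt; set q := (c %/ n)%N; set D := pdeg h; move=> Hc Hm Hq lt.
  have : (q * n + n <= D * n)%N by rewrite -mulSnr leq_mul2r Hq orbT.
  lia.
- by have := pdeg_size h (Ordinal (ltn_pmod c n0)) 0 => /leq_sizeP ->.
- have := Hz (Ordinal (ltn_pmod c n0)); rewrite mxE Hq; apply => /=.
  move: lt; rewrite {1}Hc Hq ltn_add2l; done.
Qed.


Variable alpha : 'I_N -> 'I_N -> K.
Hypothesis Halpha : forall i : 'I_N, ~~ pivotal A i ->
     col i A = \sum_(j < N | pivotal A j && (j < i)%N) alpha i j *: col j A.

Local Notation bv := (bvec A alpha).

Lemma bvec_ker (r : 'I_N) : ~~ pivotal A r -> A *m bv r = 0.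
Proof.
move=> nr; rewrite /bvec mulmxBr mulmx_sumr -colE Halpha //.
apply/eqP; rewrite subr_eq0; apply/eqP; apply: eq_bigr => j _.
by rewrite -scalemxAr -colE.
Qed.

Lemma bvec_entry (r c : 'I_N) : bv r c 0 = if c == r then 1 else if (r < c)%N then 0 else bv r c 0.
Proof.
case: eqP => [->|ne]; last case: ifP => // lt.
  rewrite /bvec !mxE eqxx /= summxE big1 ?subr0 // => j /andP[_ lj].
  have rj : r != j by rewrite -val_eqE /= gtn_eqF.
  by rewrite !mxE (negbTE rj) mulr0.
rewrite /bvec !mxE summxE (negbTE (introN eqP ne)) sub0r big1 ?oppr0 // => j /andP[_ lj].
have cj : c != j by rewrite -val_eqE /= gtn_eqF // (ltn_trans lj lt).
by rewrite !mxE (negbTE cj) mulr0.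
Qed.

Lemma vent_bvec (r : 'I_N) c : (r < c)%N -> vent (bv r) c = 0.
Proof.
move=> lt; case: (ltnP c N) => H; last exact: vent_out.
rewrite -[c]/(nat_of_ord (Ordinal H)) vent_ord bvec_entry.
by rewrite -val_eqE /= gtn_eqF // lt.
Qed.

Definition U (r : 'I_N) : 'cV[{poly K}]_n := flat (bv r).
Definition rcl (r : nat) : 'I_n := Ordinal (ltn_pmod r n0).

Lemma rdiv_lt (r : 'I_N) : (r %/ n < d + 1)%N.
Proof. by rewrite ltn_divLR ?n0 // [X in (_ < X)%N]mulnC. Qed.

Lemma U_high (r : 'I_N) (j : 'I_n) t : (r %/ n < t)%N -> (U r j 0)`_t = 0.
Proof.
move=> lt; rewrite flat_coef; case: ifP => // _; apply: vent_bvec.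
have := divn_eq r n; have := ltn_pmod r n0.
have : ((r %/ n).+1 * n <= t * n)%N by rewrite leq_mul2r lt orbT.
rewrite mulSnr; lia.
Qed.

Lemma U_top_gt (r : 'I_N) (j : 'I_n) : (r %% n < j)%N -> (U r j 0)`_(r %/ n) = 0.
Proof.
move=> lt; rewrite flat_coef rdiv_lt; apply: vent_bvec.
have := divn_eq r n; lia.
Qed.

Lemma U_top_eq (r : 'I_N) : (U r (rcl r) 0)`_(r %/ n) = 1.
Proof.
rewrite flat_coef rdiv_lt /= -divn_eq.
by rewrite vent_ord bvec_entry eqxx.
Qed.

Lemma U_size (r : 'I_N) j : (size (U r j 0)%R <= (r %/ n).+1)%N.
Proof. apply/leq_sizeP => t lt; exact: U_high. Qed.

Lemma U_pdeg (r : 'I_N) : pdeg (U r) = (r %/ n)%N.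
Proof.
apply: (@pdeg_eq _ _ _ _ _ (rcl r) 0).
  by move=> i j; rewrite (ord1 j); exact: U_size.
by rewrite U_top_eq oner_neq0.
Qed.

Lemma U_last (r : 'I_N) : islast (LV (U r)) (rcl r).
Proof.
split; first by rewrite mxE U_pdeg U_top_eq oner_neq0.
by move=> j lt; rewrite mxE U_pdeg U_top_gt.
Qed.

Lemma U_syz (r : 'I_N) : ~~ pivotal A r -> a *m U r = 0.
Proof. by move=> nr; apply: ker_syz; apply: bvec_ker. Qed.


Local Notation qt := (qtilde A n).

Lemma qt_np (r : 'I_N) : r \in qt -> ~~ pivotal A r.
Proof. by rewrite inE => /andP[]. Qed.

Lemma qt_min (r c : 'I_N) : r \in qt -> ~~ pivotal A c -> (c %% n = r %% n)%N -> (r <= c)%N.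
Proof.
rewrite inE => /andP[_ /forallP H] nc E.
by have := H c; rewrite nc E eqxx /=.
Qed.

Lemma qt_uniq (r1 r2 : 'I_N) : r1 \in qt -> r2 \in qt -> (r1 %% n = r2 %% n)%N -> r1 = r2.
Proof.
move=> q1 q2 E; apply/val_inj/eqP; rewrite eqn_leq.
by rewrite (qt_min q1 (qt_np q2)) ?(qt_min q2 (qt_np q1)).
Qed.

Lemma qt_ex (c : 'I_N) : ~~ pivotal A c -> exists2 r, r \in qt & (r %% n = c %% n)%N.
Proof.
move=> nc.
pose P := (fun i : 'I_N => ~~ pivotal A i && (i %% n == c %% n)%N).
have Pc : P c by rewrite /P nc eqxx.
case: (@arg_minnP _ c P (fun i : 'I_N => i : nat) Pc) => r /andP[nr /eqP Er] Hmin.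
exists r => //; rewrite inE nr /=; apply/forallP => i; apply/implyP => /andP[ni /eqP Ei].
by apply: Hmin; rewrite /P ni Ei Er eqxx.
Qed.

Definition lackb (rho : 'I_n) := ~~ [exists r in qt, rcl r == rho].

Lemma rcl_val (r : nat) : (rcl r : nat) = (r %% n)%N. Proof. by []. Qed.

Lemma lack_piv rho : lackb rho -> forall c : 'I_N, rcl c = rho -> pivotal A c.
Proof.
move=> L c Ec; case: (boolP (pivotal A c)) => // nc; case: (qt_ex nc) => r qr Er.
case/negP: L; apply/existsP; exists r; rewrite qr /=.
by rewrite -Ec; apply/eqP/val_inj; rewrite /= Er.
Qed.

Lemma rcl_idx D (rho : 'I_n) : rcl (D * n + rho) = rho.
Proof. by apply/val_inj; rewrite /= modnMDl modn_small. Qed.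

Hypothesis a0 : a != 0.

Lemma lack_ex : exists rho, lackb rho.
Proof.
case: (boolP [exists rho, lackb rho]) => [/existsP//|/existsPn H]; exfalso.
have N0 : (0 < N)%N by rewrite muln_gt0 n0 addn1.
pose r0 : 'I_N := Ordinal N0.
pose rep rho := odflt r0 [pick r in qt | rcl r == rho].
have Hrep : forall rho, rep rho \in qt /\ rcl (rep rho) = rho.
  move=> rho; rewrite /rep; case: pickP => [r /andP[qr /eqP E]|P0] //=.
  by move: (H rho); rewrite negbK => /existsP [r /andP[qr E]]; have := P0 r; rewrite qr E.
move/negP: a0; apply; apply/eqP; apply: (@syz_family_contra _ _ a (fun rho => U (rep rho))).
  by move=> rho; apply: U_syz; apply: qt_np; case: (Hrep rho).
by move=> rho; case: (Hrep rho) => _ {2}<-; exact: U_last.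
Qed.

Lemma delta_entry (rho i : 'I_n) : (delta_mx rho 0 : 'cV[{poly K}]_n) i 0 = if i == rho then 1 else 0.
Proof. by rewrite mxE eqxx andbT; case: eqP. Qed.

Lemma lack_uniq r1 r2 : lackb r1 -> lackb r2 -> r1 = r2.
Proof.
move=> L1 L2; apply/eqP/negPn/negP => n12.
case: (eqVneq (a 0 r2) 0) => [a2|a2].
  pose h : 'cV[{poly K}]_n := delta_mx r2 0.
  have Sh : a *m h = 0.
    by apply/matrixP => i j; rewrite (ord1 i) (ord1 j) -colE !mxE a2.
  have Hs : forall i j, (size (h i j) <= 0.+1)%N.
    move=> i j; rewrite (ord1 j) delta_entry; case: eqP => _.
    by rewrite size_poly1. by rewrite size_poly0.
  have hd : pdeg h = 0%N.
    by apply: (@pdeg_eq _ _ _ _ _ r2 0) => //; rewrite delta_entry eqxx coef1 oner_neq0.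
  have Hl : islast (LV h) r2.
    split; first by rewrite mxE hd delta_entry eqxx coef1 oner_neq0.
    by move=> j lt; rewrite mxE hd delta_entry (_ : (j == r2) = false) ?coef0 //; apply/negbTE; rewrite -val_eqE /= gtn_eqF.
  case: (syz_np Sh _ Hl) => [|c [Ec nc]]; first by rewrite hd.
  move: Ec; rewrite hd mul0n add0n => Ec.
  by move/negP: nc; apply; apply: (lack_piv L2); apply/val_inj; rewrite /= Ec modn_small.
pose h : 'cV[{poly K}]_n := a 0 r2 *: delta_mx r1 0 - a 0 r1 *: delta_mx r2 0.
have hE : forall i, h i 0 = (if i == r1 then a 0 r2 else 0) - (if i == r2 then a 0 r1 else 0).
  move=> i; rewrite !mxE !eqxx !andbT.
  by case: (i == r1); case: (i == r2); rewrite ?mulr1 ?mulr0.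
have Sh : a *m h = 0.
  apply/matrixP => i j; rewrite (ord1 i) (ord1 j) mulmxBr -!scalemxAr -!colE.
  by rewrite [LHS]mxE [_ *: _]lock !mxE -lock !mxE mulrC subrr.
have hd : (pdeg h <= d)%N.
  apply: pdeg_le => i j; rewrite (ord1 j) hE.
  apply/leq_sizeP => t lt; rewrite coefB.
  by case: (i == r1); case: (i == r2);
    rewrite ?coef0 ?subr0 ?sub0r ?oppr0 //;
    rewrite ?(leq_sizeP _ _ (a_size _)) ?subr0 ?oppr0.
have hn0 : h != 0.
  apply/negP => /eqP h0; have := hE r1; rewrite h0 mxE eqxx (negbTE n12) subr0.
  by move/esym/eqP; rewrite (negbTE a2).
case: (islast_ex (LV_neq0 hn0)) => rho Hl.
have Hrho : (rho == r1) || (rho == r2).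
  move: Hl.1; rewrite mxE hE; case: (rho == r1) => //; case: (rho == r2) => //.
  by rewrite subrr coef0 eqxx.
case: (syz_np Sh hd Hl) => c [Ec nc]; move/negP: nc; apply.
have Ec' : rcl c = rho by apply/val_inj; rewrite /= Ec modnMDl modn_small.
by case/orP: Hrho => /eqP E; [apply: (lack_piv L1) | apply: (lack_piv L2)]; rewrite Ec' E.
Qed.

Lemma card_qt : #|qt| = (n - 1)%N.
Proof.
case: lack_ex => r0 L0.
have -> : #|qt| = #|[set rcl (r : 'I_N) | r : 'I_N in qt]|.
  rewrite card_in_imset // => r1 r2 q1 q2 E.
  by apply: qt_uniq => //; rewrite -!rcl_val E.
have -> : [set rcl (r : 'I_N) | r : 'I_N in qt] = [set~ r0].
  apply/setP => rho; rewrite !inE; apply/imsetP/idP.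
    case=> r qr ->; apply/negP => /eqP E; move/negP: L0; apply.
    by apply/existsP; exists r; rewrite qr E eqxx.
  move=> nr; case: (boolP (lackb rho)) => [L|].
    by rewrite (lack_uniq L L0) eqxx in nr.
  by rewrite negbK => /existsP [r /andP[qr /eqP E]]; exists r.
by rewrite cardsC1 card_ord subn1.
Qed.


Lemma N0 : (0 < N)%N. Proof. by rewrite muln_gt0 n0 addn1. Qed.
Definition r0 : 'I_N := Ordinal N0.
Definition rep (rho : 'I_n) := odflt r0 [pick r in qt | rcl r == rho].

Lemma repP rho : ~~ lackb rho -> rep rho \in qt /\ rcl (rep rho) = rho.
Proof.
move=> H; rewrite /rep; case: pickP => [r /andP[qr /eqP E]|P0] //=.
by move: H; rewrite negbK => /existsP [r /andP[qr E]]; have := P0 r; rewrite qr E.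
Qed.

Local Notation S := (enum qt).
Local Notation us := [seq U r | r <- S].

Lemma U_inj : {in qt &, injective U}.
Proof.
move=> r1 r2 q1 q2 E; apply: qt_uniq => //; rewrite -!rcl_val.
by have := U_last r1; rewrite E => H; rewrite (islast_uniq H (U_last r2)).
Qed.

Lemma us_uniq : uniq us.
Proof.
rewrite map_inj_in_uniq ?enum_uniq // => r1 r2; rewrite !mem_enum; exact: U_inj.
Qed.

Lemma size_us : size us = #|qt|.
Proof. by rewrite size_map -cardE. Qed.

Definition sq (i : nat) : 'I_N := nth r0 S i.

Lemma sq_qt (i : 'I_(size us)) : sq i \in qt.
Proof. rewrite -mem_enum; apply: mem_nth; by rewrite -(size_map U). Qed.

Lemma us_nth (i : 'I_(size us)) : us`_i = U (sq i).
Proof. by rewrite (nth_map r0) // -(size_map U). Qed.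

Definition spn (h : 'cV[{poly K}]_n) :=
  exists p : 'I_(size us) -> {poly K}, h = \sum_i p i *: us`_i.

Lemma spn0 : spn 0.
Proof. by exists (fun => 0); rewrite big1 // => i _; rewrite scale0r. Qed.

Lemma spn_add h1 h2 : spn h1 -> spn h2 -> spn (h1 + h2).
Proof.
move=> [p1 ->] [p2 ->]; exists (fun i => p1 i + p2 i).
by rewrite -big_split; apply: eq_bigr => i _; rewrite scalerDl.
Qed.

Lemma spn_U (r : 'I_N) (c : {poly K}) : r \in qt -> spn (c *: U r).
Proof.
move=> qr; have Hi : (index r S < size us)%N by rewrite size_map index_mem mem_enum.
exists (fun j => if j == Ordinal Hi then c else 0).
rewrite (bigD1 (Ordinal Hi)) //= eqxx big1 ?addr0.
  by rewrite (nth_map r0) ?index_mem ?mem_enum // nth_index // mem_enum.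
by move=> j /negbTE ->; rewrite scale0r.
Qed.

Lemma gen m : forall h, a *m h = 0 ->
  (forall rho, islast (LV h) rho -> (pdeg h * n + rho < m)%N) -> spn h.
Proof.
elim: m => [|m IH] h Sh Hm.
  case: (eqVneq h 0) => [->|hn]; first exact: spn0.
  by case: (islast_ex (LV_neq0 hn)) => rho /Hm.
case: (eqVneq h 0) => [->|hn]; first exact: spn0.
case: (islast_ex (LV_neq0 hn)) => rho Hl; have Hmr := Hm _ Hl.
set D := pdeg h in Hmr.
case: (boolP (lackb rho)) => L.
  exfalso; move/negP: a0; apply; apply/eqP.
  apply: (@syz_family_contra _ _ a (fun r => if r == rho then h else U (rep r))).
    move=> r; case: eqP => // /eqP nr; apply: U_syz; apply: qt_np.
    by case: (@repP r _) => //; apply/negP => L'; rewrite (lack_uniq L' L) eqxx in nr.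
  move=> r; case: eqP => [->//|/eqP nr].
  have nL : ~~ lackb r by apply/negP => L'; rewrite (lack_uniq L' L) eqxx in nr.
  by case: (repP nL) => _ {2}<-; exact: U_last.
move: L; rewrite negbK => /existsP [r /andP[qr /eqP Er]].
have Hr := divn_eq r n.
have Erv : (r %% n)%N = rho by rewrite -rcl_val Er.
case: (leqP (r %/ n) D) => kD; last first.
  exfalso.
  have hd : (D <= d)%N by have := rdiv_lt r; move: kD; lia.
  case: (syz_np Sh hd Hl) => c [Ec nc].
  have := qt_min qr nc; rewrite Ec modnMDl modn_small // Erv => /(_ erefl).
  rewrite {1}Hr Erv leq_add2r leq_mul2r leqNgt kD orbF; apply/negP.
  by rewrite -lt0n n0.
pose c := LV h rho 0.
pose s := c%:P * 'X^(D - r %/ n).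
pose h' := h - s *: U r.
have Sh' : a *m h' = 0 by rewrite mulmxBr -scalemxAr U_syz ?qt_np // scaler0 Sh subr0.
have h'E : forall i t, (h' i 0)`_t = (h i 0)`_t - c * (if (t < D - r %/ n)%N then 0 else (U r i 0)`_(t - (D - r %/ n))).
  by move=> i t; rewrite !mxE coefB -mulrA coefCM coefXnM.
have h'd : (pdeg h' <= D)%N.
  apply: pdeg_le => i j; rewrite (ord1 j); apply/leq_sizeP => t lt.
  rewrite h'E (leq_sizeP _ _ (pdeg_size h i 0)) // ltnNge (leq_trans (leq_subr _ _) (ltnW lt)) /=.
  by rewrite U_high ?mulr0 ?subr0 //; move: lt kD; lia.
have h'top : forall i : 'I_n, (rho <= i)%N -> (h' i 0)`_D = 0.
  move=> i le; rewrite h'E ltnNge leq_subr /= subKn //.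
  have LVi : LV h i 0 = (h i 0)`_D by rewrite mxE.
  move: le; rewrite leq_eqVlt => /orP[/eqP E|lt].
    have -> : i = rcl r by apply/val_inj; rewrite /= -E Erv.
    by rewrite U_top_eq mulr1 /c mxE Er subrr.
  by rewrite U_top_gt ?mulr0 ?subr0 -?LVi ?(Hl.2 i) //; rewrite Erv.
have : spn h'.
  apply: IH => // rho' Hl'.
  case: (ltnP (pdeg h') D) => lt.
    have : ((pdeg h').+1 * n <= D * n)%N by rewrite leq_mul2r lt orbT.
    rewrite mulSnr; move: (ltn_ord rho') Hmr; lia.
  have E : pdeg h' = D by apply/eqP; rewrite eqn_leq h'd lt.
  have : (rho' < rho)%N.
    rewrite ltnNge; apply/negP => le; move: Hl'.1; rewrite mxE E h'top //.
    by rewrite eqxx.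
  rewrite E; move: Hmr; lia.
have -> : h = h' + s *: U r by rewrite /h' subrK.
by move=> H1; apply: spn_add H1 (spn_U _ qr).
Qed.

Lemma main : mu_basis a us.
Proof.
rewrite /mu_basis undup_id ?us_uniq //.
have tri : forall i : 'I_(size us), islast (LV us`_i) (rcl (sq i)).
  by move=> i; rewrite us_nth; exact: U_last.
have ldi : injective (fun i : 'I_(size us) => rcl (sq i)).
  move=> i j E; apply/val_inj.
  have Eq : sq i = sq j by apply: (qt_uniq (sq_qt i) (sq_qt j)); rewrite -!rcl_val E.
  have Hi : (i < size S)%N by rewrite -(size_map U) ltn_ord.
  have Hj : (j < size S)%N by rewrite -(size_map U) ltn_ord.
  by move/eqP: Eq; rewrite /sq nth_uniq ?enum_uniq // => /eqP.
split.
- by rewrite size_us card_qt.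
- apply/freeP => k Hk.
  have Hs : forall i : 'I_#|qt|, (i < size S)%N by move=> i; rewrite -cardE.
  have ldi' : injective (fun i : 'I_#|qt| => rcl (nth r0 S i)).
    move=> i j E; apply/val_inj.
    have Eq : nth r0 S i = nth r0 S j.
      apply: qt_uniq; first (by rewrite -mem_enum; apply: mem_nth).
        by rewrite -mem_enum; apply: mem_nth.
      by rewrite -!rcl_val E.
    by move/eqP: Eq; rewrite nth_uniq ?enum_uniq // => /eqP.
  apply: (@tri_indep _ _ _ (fun i : 'I_#|qt| => LV (U (nth r0 S i))) _ k ldi').
    by move=> i; exact: U_last.
  apply: (etrans _ Hk); apply: eq_bigr => j _; congr (_ *: _).
  change (LV (U (nth r0 S j)) = nth 0 (map (@LV K n) (map U S)) j).
  by rewrite (nth_map 0) ?size_map // (nth_map r0).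
- apply/allP => h /mapP [r]; rewrite mem_enum => qr ->.
  by rewrite /in_syz U_syz ?qt_np.
- move=> h Sh; apply: (@gen ((pdeg h).+1 * n)) => // rho _.
  by rewrite mulSnr ltn_add2l.
- move=> p Hp i; exact: (@poly_indep _ _ _ _ _ p ldi tri Hp).
Qed.

End Main.

Unset Implicit Arguments.

Theorem theorem1 (K : fieldType) (n d : nat) (a : 'rV[{poly K}]_n)
  (alpha : 'I_(n * (d + 1)) -> 'I_(n * (d + 1)) -> K) :
  (1 < n)%N -> a != 0 -> pdeg a = d ->
  (forall i : 'I_(n * (d + 1)), ~~ pivotal (Amat d a) i ->
     col i (Amat d a) =
       \sum_(j < n * (d + 1) | pivotal (Amat d a) j && (j < i)%N)
          alpha i j *: col j (Amat d a)) ->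
  mu_basis a [seq flat (bvec (Amat d a) alpha r) | r <- enum (qtilde (Amat d a) n)].
Proof. move=> n1 a0 pa Ha; exact: main. Qed.
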